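(* Let $T$ be a tree (without loops) and $e=uv$ an edge of $T$. Then $\nu_2(T)-\nu_2(T\setminus e)\in\{0,1\}$; moreover $\nu_2(T)-\nu_2(T\setminus e)=0$ if and only if $u$ or $v$ is saturated in $T\setminus e$, and $\nu_2(T)-\nu_2(T\setminus e)=1$ if and only if $e$ is saturated in $T$.
   Context: A $2$-matching of a graph $G$ is a set of edges such that every vertex is incident to at most two of them; $\nu_2(G)$ is the maximum size of a $2$-matching and a $2$-matching of that size is called maximum. A vertex $w$ is saturated in $G$ if every maximum $2$-matching of $G$ has exactly two edges incident to $w$; an edge is saturated in $G$ if it belongs to every maximum $2$-matching of $G$. $T\setminus e$ denotes $T$ with the edge $e$ deleted (a forest). *)

(* Defs.v *)
(* A finite simple graph on a finType T is a symmetric,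
   irreflexive relation g : rel T; edges are 2-element vertex sets. *)
From mathcomp Require Import all_boot.
Set Implicit Arguments. Unset Strict Implicit. Unset Printing Implicit Defensive.

Section Graphs.
Variable T : finType.

Definition simple_graph (g : rel T) : Prop := symmetric g /\ irreflexive g.

Definition edges (g : rel T) : {set {set T}} :=
  [set f : {set T} | [exists x, exists y, g x y && (f == [set x; y])]].

(* a tree: connected, simple, and with no cycle (a cycle being a closed
   walk through >= 3 pairwise distinct vertices) *)
Definition tree (g : rel T) : Prop :=
  simple_graph g /\ (forall x y, connect g x y) /\
  (forall c : seq T, ucycle g c -> size c < 3).

Definition del_edge (g : rel T) (u v : T) : rel T :=
  fun x y => g x y && ([set x; y] != [set u; v]).

Definition inc (M : {set {set T}}) (w : T) : {set {set T}} :=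
  [set f in M | w \in f].

Definition two_matching (g : rel T) (M : {set {set T}}) : bool :=
  (M \subset edges g) && [forall w, #|inc M w| <= 2].

Definition nu2 (g : rel T) : nat :=
  \max_(M : {set {set T}} | two_matching g M) #|M|.

Definition max_two_matching (g : rel T) (M : {set {set T}}) : Prop :=
  two_matching g M /\ #|M| = nu2 g.

Definition saturated_vertex (g : rel T) (w : T) : Prop :=
  forall M, max_two_matching g M -> #|inc M w| = 2.

Definition saturated_edge (g : rel T) (f : {set T}) : Prop :=
  forall M, max_two_matching g M -> f \in M.

End Graphs.

(* Main.v *)
Require Import Defs.
From Stdlib Require Import Classical.
From mathcomp Require Import all_boot zify.

Set Implicit Arguments. Unset Strict Implicit. Unset Printing Implicit Defensive.

Section L.
Variable T : finType.
Implicit Types (g : rel T) (M : {set {set T}}).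

Lemma tm0 g : two_matching g set0.
Proof.
apply/andP; split; first exact: sub0set.
apply/forallP => w; rewrite (_ : inc set0 w = set0) ?cards0 //.
by apply/setP => f; rewrite !inE.
Qed.

Lemma nu2_ge g M : two_matching g M -> #|M| <= nu2 g.
Proof. move=> H; exact: (leq_bigmax_cond M H). Qed.

Lemma nu2_ex g : exists M, max_two_matching g M.
Proof.
rewrite /max_two_matching /nu2.
rewrite (bigmax_eq_arg set0 (P := fun M => two_matching g M) (F := fun M => #|M|)) ?tm0 //.
case: arg_maxnP; first exact: tm0.
move=> M HM _; by exists M.
Qed.

Lemma edges_del g u v :
  edges (del_edge g u v) = edges g :\ [set u; v].
Proof.
apply/setP => f; rewrite !inE; apply/existsP/andP.
- case=> x /existsP [y /andP [/andP [gxy ne] /eqP ->]]; split => //.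
  by apply/existsP; exists x; apply/existsP; exists y; rewrite gxy eqxx.
- case=> ne /existsP [x /existsP [y /andP [gxy /eqP E]]].
  exists x; apply/existsP; exists y; rewrite /del_edge gxy -E ne eqxx //.
Qed.

Lemma tm_del_up g u v M : two_matching (del_edge g u v) M -> two_matching g M.
Proof.
case/andP => sub H; apply/andP; split => //.
by apply: (subset_trans sub); rewrite edges_del subD1set.
Qed.

Lemma tm_del_down g u v M : two_matching g M ->
  two_matching (del_edge g u v) (M :\ [set u; v]).
Proof.
case/andP => sub /forallP H; apply/andP; split.
  by rewrite edges_del; apply: setSD.
apply/forallP => w; apply: leq_trans (H w); apply: subset_leq_card.
by apply/subsetP => f; rewrite !inE => /andP [/andP [_ ->] ->].
Qed.


Section Main.
Variables (g : rel T) (u v : T).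
Local Notation g' := (del_edge g u v).
Local Notation e := [set u; v].
Implicit Types (A B : {set {set T}}) (f : {set T}).

Lemma tm_card_le M : two_matching g M -> #|M| <= (#|M :\ e|).+1.
Proof. by move=> _; rewrite (cardsD1 e M); case: (e \in M). Qed.

Lemma nu2_le : nu2 g' <= nu2 g.
Proof. by case: (nu2_ex g') => M [H <-]; apply: nu2_ge; apply: tm_del_up H. Qed.

Lemma nu2_leS : nu2 g <= (nu2 g').+1.
Proof.
case: (nu2_ex g) => M [H <-]; apply: leq_trans (tm_card_le H) _.
by rewrite ltnS; apply: nu2_ge; apply: tm_del_down.
Qed.

Lemma L4 M : nu2 g = (nu2 g').+1 -> max_two_matching g M -> e \in M.
Proof.
move=> E [H HM]; apply/negPn/negP => nM.
have : #|M :\ e| <= nu2 g' by apply: nu2_ge; apply: tm_del_down.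
by rewrite (cardsD1 e M) (negbTE nM) add0n in HM; rewrite HM E ltnn.
Qed.

Lemma L4b w : w \in e -> nu2 g = (nu2 g').+1 -> ~ saturated_vertex g' w.
Proof.
move=> we E sat; case: (nu2_ex g) => M MM.
have eM := L4 E MM; case: MM => H HM.
have N2 : max_two_matching g' (M :\ e).
  split; first exact: tm_del_down.
  by apply/eqP; rewrite -eqSS -E -HM (cardsD1 e M) eM.
have := sat _ N2.
have lt : #|inc (M :\ e) w| < #|inc M w|.
  apply: proper_card; apply/properP; split.
    by apply/subsetP => f; rewrite !inE => /andP [/andP [_ ->] ->].
  by exists e; [rewrite inE eM we | rewrite !inE eqxx].
case/andP: H => _ /forallP /(_ w) le2 eq2.
by move: (leq_trans lt le2); rewrite eq2 ltnn.
Qed.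

Lemma L5 : nu2 g = nu2 g' -> ~ saturated_edge g e.
Proof.
move=> E sat; case: (nu2_ex g') => M [H HM].
have : e \in M by apply: sat; split; [exact: tm_del_up H | rewrite E].
case/andP: H => /subsetP sub _ /sub; rewrite edges_del !inE eqxx //.
Qed.



Hypotheses (sym : symmetric g) (irr : irreflexive g)
  (acyc : forall c : seq T, ucycle g c -> size c < 3) (guv : g u v).

Lemma sym' : symmetric g'.
Proof. by move=> x y; rewrite /del_edge sym setUC. Qed.

Lemma not_conn : ~~ connect g' u v.
Proof.
apply/negP => /connectP [p pp lp].
move: lp; case: (shortenP pp) => p' pp' up' _ lp'.
have gsub : subrel g' g by move=> x y /andP [].
case: p' pp' up' lp' => [|x [|y r]] /= pp' up' lp'.
- by move: guv; rewrite lp' irr.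
- by move: pp'; rewrite -lp' /del_edge eqxx /= andbF.
- have : size [:: u, x, y & r] < 3.
    apply: acyc; apply/andP; split; last exact: up'.
    rewrite /cycle rcons_path.
    rewrite (sub_path gsub (pp' : path g' u [:: x, y & r])) /=.
    by rewrite -lp' /= sym.
  by [].
Qed.

Definition S := [set x | connect g' u x].
Definition MS (A : {set {set T}}) : {set {set T}} := [set f in A | f \subset S].
Definition MN (A : {set {set T}}) : {set {set T}} := [set f in A | f \subset ~: S].

Lemma edge_form f : f \in edges g' -> exists x y, g' x y /\ f = [set x; y].
Proof. by rewrite inE => /existsP [x /existsP [y /andP [H /eqP ->]]]; exists x, y. Qed.

Lemma edge_side f : f \in edges g' -> (f \subset S) || (f \subset ~: S).
Proof.
case/edge_form => x [y [gxy ->]]; rewrite !subUset !sub1set !inE.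
case xS : (connect g' u x); case yS : (connect g' u y) => //=.
- by rewrite (connect_trans xS (connect1 gxy)) in yS.
- by rewrite sym' in gxy; rewrite (connect_trans yS (connect1 gxy)) in xS.
Qed.

Lemma MSMN0 A B : A \subset edges g' -> MS A :&: MN B = set0.
Proof.
move=> /subsetP sA; apply/setP => f; rewrite !inE.
apply/negP => /andP [/andP [fA fS] /andP [_ fN]].
case: (edge_form (sA _ fA)) => x [y [_ E]].
have xf : x \in f by rewrite E !inE eqxx.
by move: (subsetP fN x xf); rewrite inE (subsetP fS x xf).
Qed.

Lemma card_U A B : A \subset edges g' -> #|MS A :|: MN B| = #|MS A| + #|MN B|.
Proof. by move=> sA; rewrite cardsU MSMN0 // cards0 subn0. Qed.

Lemma card_split A : A \subset edges g' -> #|A| = #|MS A| + #|MN A|.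
Proof.
move=> sA; rewrite -card_U //.
have -> // : MS A :|: MN A = A.
apply/setP => f; rewrite !inE.
case fA : (f \in A) => //=; exact: edge_side (subsetP sA _ fA).
Qed.

Lemma inc_S A B w : w \in S -> inc (MS A :|: MN B) w \subset inc A w.
Proof.
move=> wS; apply/subsetP => f; rewrite !inE.
case/andP => /orP [/andP [-> _] //| /andP [_ fN]] wf.
by move: (subsetP fN w wf); rewrite inE wS.
Qed.

Lemma inc_N A B w : w \notin S -> inc (MS A :|: MN B) w \subset inc B w.
Proof.
move=> wS; apply/subsetP => f; rewrite !inE.
case/andP => /orP [/andP [_ fN] | /andP [-> _] //] wf.
by move: (subsetP fN w wf); rewrite (negbTE wS).
Qed.

Lemma tm_comb A B : two_matching g' A -> two_matching g' B ->
  two_matching g' (MS A :|: MN B).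
Proof.
case/andP => sA /forallP hA; case/andP => sB /forallP hB; apply/andP; split.
  apply/subsetP => f; rewrite in_setU => /orP [] /setIdP [f1 _];
  [exact: (subsetP sA) | exact: (subsetP sB)].
apply/forallP => w; case wS : (w \in S).
  exact: leq_trans (subset_leq_card (inc_S _ _ wS)) (hA w).
by apply: leq_trans (subset_leq_card (inc_N _ _ (negbT wS))) (hB w).
Qed.

Lemma L6 : ~ saturated_vertex g' u -> ~ saturated_vertex g' v ->
  nu2 g = (nu2 g').+1.
Proof.
move=> nu nv.
have [A [[MA HA] iA]] : exists A, max_two_matching g' A /\ #|inc A u| != 2.
  apply: NNPP => H; apply: nu => A MA; apply/eqP; apply: NNPP => H2.
  by apply: H; exists A; split => //; apply/negP.
have [B [[MB HB] iB]] : exists B, max_two_matching g' B /\ #|inc B v| != 2.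
  apply: NNPP => H; apply: nv => B MB; apply/eqP; apply: NNPP => H2.
  by apply: H; exists B; split => //; apply/negP.
have sA : A \subset edges g' by case/andP: MA.
have sB : B \subset edges g' by case/andP: MB.
set C := MS A :|: MN B.
have MC := tm_comb MA MB.
have MD := tm_comb MB MA.
have cC : #|C| = nu2 g'.
  have h1 := nu2_ge MC; have h2 := nu2_ge MD.
  move: (card_split sA) (card_split sB) h1 h2.
  rewrite /C !card_U // HA HB; lia.
have uS : u \in S by rewrite inE connect0.
have vS : v \notin S by rewrite inE not_conn.
have iu : #|inc C u| <= 1.
  have := subset_leq_card (inc_S A B uS).
  case/andP: MA => _ /forallP /(_ u); move: iA; rewrite -/C; move=> a b c; lia.
have iv : #|inc C v| <= 1.
  have := subset_leq_card (inc_N A B vS).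
  case/andP: MB => _ /forallP /(_ v); move: iB; rewrite -/C; move=> a b c; lia.
have eC : e \notin C.
  apply/negP => /(subsetP (proj1 (andP MC))); by rewrite edges_del !inE eqxx.
have Me : two_matching g (e |: C).
  case/andP: MC => sC /forallP hC; apply/andP; split.
    rewrite subUset sub1set (subset_trans sC) ?andbT.
      by rewrite inE; apply/existsP; exists u; apply/existsP; exists v; rewrite guv eqxx.
    by rewrite edges_del subD1set.
  apply/forallP => w; case we : (w \in e).
    have : inc (e |: C) w \subset e |: inc C w.
      by apply/subsetP => f; rewrite !inE => /andP [/orP [->|->] ->]; rewrite ?orbT.
    move/subset_leq_card => h; apply: leq_trans h _.
    rewrite cardsU1; case: (e \notin inc C w); rewrite /= ?add0n ?add1n;
    move: we; rewrite in_set2 => /orP [] /eqP ->; [move: iu | move: iv | move: iu | move: iv]; move=> h; rewrite ?ltnS //; exact: leq_trans h _.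
  apply: leq_trans (hC w); apply: subset_leq_card.
  apply/subsetP => f; rewrite !inE => /andP [/orP [/eqP -> | fC] wf].
    by rewrite wf in we.
  by rewrite fC wf.
have := nu2_ge Me; rewrite cardsU1 eC cC => h.
by apply/eqP; rewrite eqn_leq nu2_leS h.
Qed.

End Main.
End L.

Theorem lemma2p4 (T : finType) (g : rel T) (u v : T) :
  tree g -> g u v ->
  (nu2 g = nu2 (del_edge g u v) \/ nu2 g = (nu2 (del_edge g u v)).+1) /\
  (nu2 g = nu2 (del_edge g u v) <->
     saturated_vertex (del_edge g u v) u \/ saturated_vertex (del_edge g u v) v) /\
  (nu2 g = (nu2 (del_edge g u v)).+1 <-> saturated_edge g [set u; v]).
Proof.
move=> [[sym irr] [_ acyc]] guv.
have h1 := nu2_le g u v; have h2 := nu2_leS g u v.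
have P1 : nu2 g = nu2 (del_edge g u v) \/ nu2 g = (nu2 (del_edge g u v)).+1.
  case E : (nu2 g == nu2 (del_edge g u v)); first by left; apply/eqP.
  right; apply/eqP; rewrite eqn_leq h2 /=; move: E; rewrite eqn_leq h1 andbT => E.
  by rewrite ltnNge E.
split => //; split; first split.
- move=> E; apply: NNPP => H.
  have := L6 sym irr acyc guv (fun h => H (or_introl h)) (fun h => H (or_intror h)).
  rewrite E => /eqP; rewrite -[X in X == _]addn0 -addn1 eqn_add2l //.
- move=> Hs; case: P1 => // E; exfalso.
  case: Hs; apply: L4b => //; by rewrite !inE eqxx ?orbT.
- split.
  + move=> E M MM; exact: L4 E MM.
  + move=> Hs; case: P1 => // E; exfalso; exact: L5 E Hs.
Qed.
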